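(* Let $\Lambda=\{0,1,2\}^2\subset\mathbb{Z}^2$ and let $\mu$ be the probability measure on $\{0,1\}^\Lambda$ giving probability $1/7$ to each of the seven configurations whose sets of occupied sites are: $\{(1,1)\}$, $\{(1,0)\}$, $\{(2,1)\}$, $\{(1,2)\}$, $\{(0,1)\}$, $\{(0,2),(2,0)\}$, $\{(0,0),(2,2)\}$ (all other sites empty). Then $\mu$ is LTI and invariant under all symmetries of the square, but there is no probability measure on configurations of a $4\times4$ square $\Lambda'\supset\Lambda$ whose marginal on each $3\times3$ subsquare of $\Lambda'$ is the corresponding translate of $\mu$; in particular $\mu$ has no translation invariant extension to $\{0,1\}^{\mathbb{Z}^2}$.
   Context: A probability measure $\mu_\Lambda$ on $\{0,1\}^\Lambda$, $\Lambda\subset\mathbb{Z}^d$, is LTI if for all $A,A'\subset\Lambda$ with $A'$ a translate of $A$, the marginal on $\{0,1\}^{A'}$ is the translate of the marginal on $\{0,1\}^A$. Symmetries of the square are the eight dihedral symmetries of $\{0,1,2\}^2$. *)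

(* Defs.v *)
From HB Require Import structures.
From mathcomp Require Import all_boot all_order all_algebra.
Set Implicit Arguments. Unset Strict Implicit. Unset Printing Implicit Defensive.
Import Order.TTheory GRing.Theory Num.Theory.
Local Open Scope ring_scope.

Definition site (n : nat) := ('I_n * 'I_n)%type.
Definition config (n : nat) := {ffun site n -> bool}.

Definition coords n (x : site n) : int * int := ((x.1 : nat)%:Z, (x.2 : nat)%:Z).
Definition tr (v : int * int) (z : int * int) : int * int := (z.1 + v.1, z.2 + v.2).

Definition is_prob (R : numDomainType) n (p : config n -> R) : Prop :=
  (forall s, 0 <= p s) /\ \sum_(s : config n) p s = 1.

Definition cyl (R : numDomainType) n (p : config n -> R) (A : {set site n})
  (xi : site n -> bool) : R :=
  \sum_(s : config n | [forall x in A, s x == xi x]) p s.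

(* LTI: whenever g maps A onto a translate A' = A + v inside the box,
   the marginal on A' is the translate of the marginal on A. *)
Definition LTI (R : numDomainType) n (p : config n -> R) : Prop :=
  forall (A : {set site n}) (v : int * int) (g : site n -> site n),
    (forall x, x \in A -> coords (g x) = tr v (coords x)) ->
    forall xi : site n -> bool,
      \sum_(s : config n | [forall x in A, s (g x) == xi x]) p s = cyl p A xi.

(* The eight dihedral symmetries of {0,1,2}^2: optional transpose, then
   optional reflections of each coordinate. *)
Definition flip (b : bool) (i : 'I_3) : 'I_3 := if b then rev_ord i else i.
Definition dsym (b1 b2 b3 : bool) (x : site 3) : site 3 :=
  let y := if b3 then (x.2, x.1) else x in (flip b1 y.1, flip b2 y.2).

Definition pt (i j : nat) : site 3 := (inord i, inord j).
Definition cfg (l : seq (site 3)) : config 3 := [ffun x => x \in l].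

Definition mu_support : seq (config 3) :=
  [:: cfg [:: pt 1 1]; cfg [:: pt 1 0]; cfg [:: pt 2 1]; cfg [:: pt 1 2];
      cfg [:: pt 0 1]; cfg [:: pt 0 2; pt 2 0]; cfg [:: pt 0 0; pt 2 2]].

Definition mu (R : fieldType) (s : config 3) : R :=
  if s \in mu_support then 7%:R^-1 else 0.

Definition emb (a b : 'I_2) (x : site 3) : site 4 :=
  (inord (x.1 + a)%N, inord (x.2 + b)%N).

(* Main.v *)
Require Import Defs.
From HB Require Import structures.
From mathcomp Require Import all_boot all_order all_algebra.
From mathcomp Require Import zify.
From Stdlib Require Import FunctionalExtensionality.
Import Order.TTheory GRing.Theory Num.Theory.

Definition ord3 (n : nat) : 'I_3 := Ordinal (ltn_pmod n (isT : 0 < 3)).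
Definition ord4 (n : nat) : 'I_4 := Ordinal (ltn_pmod n (isT : 0 < 4)).
Definition pt' i j : site 3 := (ord3 i, ord3 j).
Definition sites3 : seq (site 3) := [seq (ord3 i, ord3 j) | i <- iota 0 3, j <- iota 0 3].
Arguments sites3 : simpl never.
Definition sites4 : seq (site 4) := [seq (ord4 i, ord4 j) | i <- iota 0 4, j <- iota 0 4].
Arguments sites4 : simpl never.
Definition idx3 (x : site 3) := (3 * x.1 + x.2)%N.
Definition idx4 (x : site 4) := (4 * x.1 + x.2)%N.

Lemma nth_sites3 x : nth (ord3 0, ord3 0) sites3 (idx3 x) = x.
Proof. case: x => [[[|[|[|i]]] Hi] [[|[|[|j]]] Hj]] //; by apply/eqP. Qed.
Lemma nth_sites4 x : nth (ord4 0, ord4 0) sites4 (idx4 x) = x.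
Proof. case: x => [[[|[|[|[|i]]]] Hi] [[|[|[|[|j]]]] Hj]] //; by apply/eqP. Qed.
Lemma idx3_lt x : (idx3 x < 9)%N.
Proof. case: x => [[i Hi] [j Hj]]; rewrite /idx3 /=; lia. Qed.
Lemma idx4_lt x : (idx4 x < 16)%N.
Proof. case: x => [[i Hi] [j Hj]]; rewrite /idx4 /=; lia. Qed.
Lemma sites3_all x : x \in sites3.
Proof. rewrite -(nth_sites3 x); apply: mem_nth; exact: idx3_lt. Qed.

Lemma ptE i j : (i < 3)%N -> (j < 3)%N -> pt i j = pt' i j.
Proof.
move=> Hi Hj; rewrite /pt /pt'; congr pair; apply: val_inj;
  by rewrite /= inordK // modn_small.
Qed.

Definition L' : seq (seq (site 3)) :=
  [:: [:: pt' 1 1]; [:: pt' 1 0]; [:: pt' 2 1]; [:: pt' 1 2]; [:: pt' 0 1];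
      [:: pt' 0 2; pt' 2 0]; [:: pt' 0 0; pt' 2 2]].
Lemma supp_eq : mu_support = map cfg L'.
Proof. by rewrite /mu_support !ptE. Qed.

Arguments L' : simpl never.
Definition memb (f : site 3 -> bool) :=
  has (fun l => all (fun x => f x == (x \in l)) sites3) L'.
Arguments memb : simpl never.
Lemma eq_cfg (c : config 3) l : (c == cfg l) = all (fun x => c x == (x \in l)) sites3.
Proof.
apply/eqP/allP => [-> x _ | H]; first by rewrite ffunE.
by apply/ffunP => x; rewrite ffunE; apply/eqP/H/sites3_all.
Qed.
Lemma memb_ok (c : config 3) : (c \in mu_support) = memb (fun x => c x).
Proof.
rewrite supp_eq /memb; elim: L' => [|l L IH] //.
by rewrite map_cons in_cons IH eq_cfg.
Qed.

Fixpoint allb n : seq (seq bool) :=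
  if n is n'.+1 then [seq b :: t | b <- [:: true; false], t <- allb n'] else [:: [::]].
Lemma allb_ok bs : bs \in allb (size bs).
Proof.
elim: bs => [|b bs IH] //.
rewrite [allb _]/= !mem_cat.
by case: b; [apply/orP; left | apply/orP; right; apply/orP; left]; apply/mapP; exists bs.
Qed.

Lemma bits3 (s : site 3 -> bool) :
  s = (fun x => nth false [seq s y | y <- sites3] (idx3 x)).
Proof.
apply: functional_extensionality => x.
by rewrite (nth_map (ord3 0, ord3 0)) ?nth_sites3 // (_ : size sites3 = 9) ?idx3_lt.
Qed.
Lemma bits4 (s : site 4 -> bool) :
  s = (fun x => nth false [seq s y | y <- sites4] (idx4 x)).
Proof.
apply: functional_extensionality => x.
by rewrite (nth_map (ord4 0, ord4 0)) ?nth_sites4 // (_ : size sites4 = 16) ?idx4_lt.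
Qed.
Lemma all3 (P : (site 3 -> bool) -> bool) :
  all (fun bs => P (fun x => nth false bs (idx3 x))) (allb 9) -> forall s, P s.
Proof.
move=> /allP H s; rewrite (bits3 s); apply: H.
by have := allb_ok [seq s y | y <- sites3]; rewrite size_map.
Qed.
Lemma all4 (P : (site 4 -> bool) -> bool) :
  all (fun bs => P (fun x => nth false bs (idx4 x))) (allb 16) -> forall s, P s.
Proof.
move=> /allP H s; rewrite (bits4 s); apply: H.
by have := allb_ok [seq s y | y <- sites4]; rewrite size_map.
Qed.

Definition trip := [:: (true,true,true); (true,true,false); (true,false,true); (true,false,false);
 (false,true,true); (false,true,false); (false,false,true); (false,false,false)].
Definition Pd (s : site 3 -> bool) :=
  all (fun b => memb (fun x => s (dsym b.1.1 b.1.2 b.2 x)) == memb s) trip.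
Lemma dsym_chk : all (fun bs => Pd (fun x => nth false bs (idx3 x))) (allb 9).
Proof. vm_compute. reflexivity. Qed.

Definition emb' (a b : nat) (x : site 3) : site 4 := (ord4 (x.1 + a), ord4 (x.2 + b)).
Definition Pe (h : site 4 -> bool) :=
  if all (fun x => h (emb' 0 0 x) == (x \in [:: pt' 1 0])) sites3 then
  ~~ [&& memb (fun x => h (emb' 0 1 x)), memb (fun x => h (emb' 1 0 x))
       & memb (fun x => h (emb' 1 1 x))] else true.
Lemma ext_chk : all (fun bs => Pe (fun x => nth false bs (idx4 x))) (allb 16).
Proof. vm_compute. reflexivity. Qed.

Lemma embE (a b : 'I_2) x : emb a b x = emb' a b x.
Proof.
rewrite /emb /emb'; congr pair; apply: val_inj; rewrite /= inordK ?modn_small //;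
  have := ltn_ord x.1; have := ltn_ord x.2; have := ltn_ord a; have := ltn_ord b; lia.
Qed.

Lemma uniq_supp : uniq mu_support.
Proof.
rewrite supp_eq; apply: (@map_uniq _ _ (fun c : config 3 => [seq c x | x <- sites3])).
have -> : [seq [seq c x | x <- sites3] | c : config 3 <- map cfg L'] =
          [seq [seq x \in l | x <- sites3] | l <- L'].
  rewrite -map_comp; apply: eq_map => l /=; by rewrite !ffunE.
by vm_compute.
Qed.

Local Open Scope ring_scope.

Lemma sum_mu (R : fieldType) (P : pred (config 3)) :
  \sum_(s | P s) mu R s = (count P mu_support)%:R * 7%:R^-1.
Proof.
rewrite (bigID (fun s => s \in mu_support)) [\sum_(s | P s && ~~ _) _]big1 ?Monoid.mulm1; last first.
  by move=> s /andP[_ /negbTE H]; rewrite /mu H.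
rewrite (eq_bigr (fun _ => 7%:R^-1)); last by move=> s /andP[_ H]; rewrite /mu H.
rewrite sumr_const mulr_natl; congr (_ *+ _).
rewrite -size_filter; have /card_uniqP <- := filter_uniq P uniq_supp.
by apply: eq_card => s; rewrite mem_filter.
Qed.

Definition inB (d1 d2 : nat) (x : site 3) :=
  [&& 2 <= x.1 + d1, x.1 + d1 < 5, 2 <= x.2 + d2 & x.2 + d2 < 5]%N.
Definition g0 (d1 d2 : nat) (x : site 3) : site 3 :=
  (ord3 (x.1 + d1 - 2), ord3 (x.2 + d2 - 2)).
Definition encL d1 d2 (l : seq (site 3)) := [seq inB d1 d2 y && (g0 d1 d2 y \in l) | y <- sites3].
Definition encR d1 d2 (l : seq (site 3)) := [seq inB d1 d2 y && (y \in l) | y <- sites3].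
Lemma lti_chk : all (fun d1 => all (fun d2 =>
   perm_eq (map (encL d1 d2) L') (map (encR d1 d2) L')) (iota 0 5)) (iota 0 5).
Proof. vm_compute. reflexivity. Qed.

Lemma count_trans (A : {set site 3}) d1 d2 (g : site 3 -> site 3) (xi : site 3 -> bool) :
  (d1 < 5)%N -> (d2 < 5)%N ->
  (forall x, x \in A -> inB d1 d2 x /\ g x = g0 d1 d2 x) ->
  count (fun s : config 3 => [forall x in A, s (g x) == xi x]) mu_support =
  count (fun s : config 3 => [forall x in A, s x == xi x]) mu_support.
Proof.
move=> H1 H2 HA.
pose Q (t : seq bool) := [forall x in A, nth false t (idx3 x) == xi x].
have nthE (f : site 3 -> bool) x : nth false [seq f y | y <- sites3] (idx3 x) = f x.
  by rewrite (nth_map (ord3 0, ord3 0)) ?nth_sites3 // (_ : size sites3 = 9) ?idx3_lt.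
have PL : perm_eq (map (encL d1 d2) L') (map (encR d1 d2) L').
  have := allP lti_chk d1; rewrite mem_iota leq0n add0n H1 => /(_ isT) /allP /(_ d2).
  by rewrite mem_iota leq0n add0n H2 => /(_ isT).
rewrite supp_eq !count_map.
transitivity (count Q (map (encL d1 d2) L')).
  rewrite count_map; apply: eq_count => l /=; apply: eq_forallb_in => x xA.
  by rewrite /encL nthE ffunE; have [-> ->] := HA x xA.
rewrite (permP PL) count_map; apply: eq_count => l /=; apply: eq_forallb_in => x xA.
by rewrite /encR nthE ffunE; have [-> _] := HA x xA.
Qed.

Lemma lti_mu (R : numFieldType) : LTI (@mu R).
Proof.
move=> A v g H xi; rewrite /cyl !sum_mu; congr (_%:R * _).
have [A0|[x0 x0A]] := set_0Vmem A.
  by apply: eq_count => s; rewrite A0; apply/forallP/forallP => _ x; rewrite in_set0.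
case: v H => v1 v2 H.
have E x : x \in A -> ((g x).1 : int) = (x.1 : int) + v1 /\ ((g x).2 : int) = (x.2 : int) + v2.
  by move=> /H; rewrite /coords /tr /= => -[-> ->].
have [e1 e2] := E x0 x0A.
have := ltn_ord (g x0).1; have := ltn_ord (g x0).2;
have := ltn_ord x0.1; have := ltn_ord x0.2 => b1 b2 b3 b4.
have [d1 hd1] : exists d1 : nat, v1 = d1%:Z - 2 by exists (absz (v1 + 2)); lia.
have [d2 hd2] : exists d2 : nat, v2 = d2%:Z - 2 by exists (absz (v2 + 2)); lia.
subst v1 v2.
apply: (@count_trans _ d1 d2); [lia | lia |].
move=> [[i Hi] [j Hj]] xA; have [f1 f2] := E _ xA.
move: f1 f2; case: (g _) => [[a Ha] [b Hb]] /= f1 f2.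
split; first by rewrite /inB /=; apply/and4P; split; lia.
rewrite /g0; congr pair; apply: val_inj; rewrite /= modn_small; lia.
Qed.

Theorem mainTheorem14 (R : realFieldType) :
  is_prob (@mu R) /\ LTI (@mu R) /\
  (forall (b1 b2 b3 : bool) (s : config 3),
      @mu R [ffun x => s (dsym b1 b2 b3 x)] = @mu R s) /\
  ~ (exists q : config 4 -> R,
        is_prob q /\
        forall (a b : 'I_2) (eta : config 3),
          \sum_(s : config 4 | [forall x : site 3, s (emb a b x) == eta x]) q s
          = @mu R eta).
Proof.
have n7 : (7%:R : R) != 0 by rewrite pnatr_eq0.
split.
  split; first by move=> s; rewrite /mu; case: ifP => _; rewrite ?invr_ge0 ?ler0n.
  rewrite (eq_bigl predT) // sum_mu count_predT /=; exact: mulfV.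
split; first exact: lti_mu.
split.
  move=> b1 b2 b3 s; rewrite /mu !memb_ok.
  have -> : (fun x => [ffun x => s (dsym b1 b2 b3 x)] x) = (fun x => s (dsym b1 b2 b3 x)).
    by apply: functional_extensionality => x; rewrite ffunE.
  have := all3 _ dsym_chk (fun x => s x); rewrite /Pd => /allP H.
  have /eqP -> : memb (fun x => s (dsym b1 b2 b3 x)) == memb (fun x => s x).
    by apply: (H (b1, b2, b3)); case: b1 b2 b3 => [] [] [].
  by [].
move=> [q [[q0 q1] Hm]].
have zero (s : config 4) (a b : 'I_2) : [ffun x => s (emb a b x)] \notin mu_support -> q s = 0.
  move=> Hn; have := Hm a b [ffun x => s (emb a b x)].
  rewrite /mu (negbTE Hn) => Hs.
  apply/eqP; rewrite eq_le q0 andbT -Hs.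
  rewrite (bigD1 s) /=; last by apply/forallP => x; rewrite ffunE.
  by rewrite lerDl sumr_ge0 // => i _; exact: q0.
have mu0 : @mu R (cfg [:: pt 1 0]) = 7%:R^-1 by rewrite /mu /mu_support !inE eqxx orbT.
have S0 : \sum_(s : config 4 | [forall x : site 3, s (emb ord0 ord0 x) == cfg [:: pt 1 0] x]) q s = 0.
  apply: big1 => s Hs.
  have W (a b : 'I_2) : memb (fun x => s (emb' a b x)) = ([ffun x => s (emb a b x)] \in mu_support).
    rewrite memb_ok; congr memb; apply: functional_extensionality => x.
    by rewrite ffunE embE.
  have := all4 _ ext_chk (fun x => s x); rewrite /Pe.
  have -> : all (fun x => s (emb' 0 0 x) == (x \in [:: pt' 1 0])) sites3.
    apply/allP => x _; move/forallP: Hs => /(_ x); rewrite ffunE ptE // embE; exact.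
  move: (W ord0 ord_max) (W ord_max ord0) (W ord_max ord_max) => /= -> -> ->.
  have [h1|h1] := boolP ([ffun x => s (emb ord0 ord_max x)] \in mu_support); last by move=> _; apply: (zero s ord0 ord_max).
  have [h2|h2] := boolP ([ffun x => s (emb ord_max ord0 x)] \in mu_support); last by move=> _; apply: (zero s ord_max ord0).
  have [h3|h3] := boolP ([ffun x => s (emb ord_max ord_max x)] \in mu_support); last by move=> _; apply: (zero s ord_max ord_max).
  by [].
have := Hm ord0 ord0 (cfg [:: pt 1 0]); rewrite S0 mu0 => /eqP.
by rewrite eq_sym invr_eq0 (negbTE n7).
Qed.
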